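(* Let $\{\mathcal{T}_n\}_{n\ge K}$ be a $K$-type CMRT with type probabilities $p_1,\dots,p_K$ and attachment probabilities $(q_{ij})$, and for $k\ge0$ let $N_k(n)$ be the number of vertices of out-degree $k$ in $\mathcal{T}_n$. Then for each fixed $k$, $N_k(n)/n\to c_k$ in probability as $n\to\infty$, where $$c_k=\sum_{i=1}^K\frac{p_i}{1+r_i}\left(\frac{r_i}{1+r_i}\right)^k,\qquad r_i=\frac{1}{p_i}\sum_{j=1}^K p_jq_{ji},$$ and when $p_i=0$ the $i$-th term of $c_k$ is interpreted as $0$.
   Context: $K$-type Community Modulated Recursive Tree (CMRT): fix $K\ge 2$, a probability vector $(p_1,\dots,p_K)$ with $p_1=\max_i p_i>0$, and numbers $q_{ij}\ge 0$ with $\sum_{j=1}^K q_{ij}=1$ for each $i$. $\mathcal{T}_K$ is a uniform random recursive tree on vertices $\{1,\dots,K\}$ (a tree chosen uniformly among trees on these labels rooted at $1$ in which labels increase along paths from $1$), whose vertices are assigned the types $1,\dots,K$ via a uniform random permutation, so there is exactly one vertex of each type (the root of that type). For $n>K$, $\mathcal{T}_n$ is obtained from $\mathcal{T}_{n-1}$ by adding vertex $n$: (1) vertex $n$ is assigned type $i$ with probability $p_i$; (2) given its type $i$, it chooses to connect to type $j$ with probability $q_{ij}$; (3) it connects by an edge to an existing vertex of type $j$ chosen uniformly at random. All random choices are independent. Edges are directed from parent (earlier vertex) to child; the out-degree of a vertex is its number of children. *)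

(* Defs.v *)
From HB Require Import structures.
From mathcomp Require Import all_boot all_order all_algebra.
From mathcomp Require Import perm.
From mathcomp Require Import all_reals.
Set Implicit Arguments. Unset Strict Implicit. Unset Printing Implicit Defensive.
Import Order.TTheory GRing.Theory Num.Theory.
Local Open Scope ring_scope.

(* A configuration of a tree on vertices 0,...,n-1 (vertex m here is vertex
   m+1 of the paper): for each vertex its type and its parent (None for the
   root, Some v for parent v, where v < m). *)
Definition config (K : nat) := seq ('I_K * option nat).

Definition dist (R : Type) (K : nat) := seq (R * config K).

(* All recursive trees on vertices 0..m-1, as parent lists. *)
Fixpoint rec_trees (m : nat) : seq (seq (option nat)) :=
  match m with
  | 0 => [:: [::]]
  | m'.+1 =>
      if m' is 0 then [:: [:: None]]
      else flatten [seq [seq rcons t (Some v) | v <- iota 0 m'] | t <- rec_trees m']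
  end.

(* Law of T_K: uniform random recursive tree on K vertices, types given by a
   uniform random permutation of the K types. *)
Definition init_law (R : realType) (K : nat) : dist R K :=
  flatten [seq [seq ((#|{perm 'I_K}|%:R * (size (rec_trees K))%:R)^-1,
                     zip [seq s i | i <- enum 'I_K] t)
               | s : {perm 'I_K} <- enum {perm 'I_K}] | t <- rec_trees K].

Definition verts_of_type (K : nat) (c : config K) (j : 'I_K) : seq nat :=
  [seq x.1 | x <- zip (iota 0 (size c)) c & x.2.1 == j].

(* One growth step: new vertex gets type i w.p. p i, chooses type j w.p. q i j,
   attaches to a uniform existing vertex of type j. *)
Definition step (R : realType) (K : nat) (p : 'I_K -> R) (q : 'I_K -> 'I_K -> R)
  (d : dist R K) : dist R K :=
  flatten [seq
    flatten [seq flatten [seq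
      [seq (x.1 * p i * q i j / (size (verts_of_type x.2 j))%:R,
            rcons x.2 (i, Some v)) | v <- verts_of_type x.2 j]
      | j <- enum 'I_K] | i <- enum 'I_K]
    | x <- d].

(* Law of T_n, for n >= K. *)
Definition cmrt_law (R : realType) (K : nat) (p : 'I_K -> R)
  (q : 'I_K -> 'I_K -> R) (n : nat) : dist R K :=
  iter (n - K) (step p q) (init_law R K).

Definition cmrt_prob (R : realType) (K : nat) (p : 'I_K -> R)
  (q : 'I_K -> 'I_K -> R) (n : nat) (E : config K -> bool) : R :=
  \sum_(x <- cmrt_law p q n | E x.2) x.1.

Definition outdeg (K : nat) (c : config K) (v : nat) : nat :=
  count (fun e => e.2 == Some v) c.

Definition Nk (K : nat) (k : nat) (c : config K) : nat :=
  count (fun v => outdeg c v == k) (iota 0 (size c)).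

Definition rr (R : realType) (K : nat) (p : 'I_K -> R) (q : 'I_K -> 'I_K -> R)
  (i : 'I_K) : R := (\sum_j p j * q j i) / p i.

Definition ck (R : realType) (K : nat) (p : 'I_K -> R) (q : 'I_K -> 'I_K -> R)
  (k : nat) : R :=
  \sum_i (if p i == 0 then 0
          else p i / (1 + rr p q i) * (rr p q i / (1 + rr p q i)) ^+ k).

(* Main.v *)
Require Import Defs.
From HB Require Import structures.
From mathcomp Require Import all_boot all_order all_algebra.
From mathcomp Require Import perm.
From mathcomp Require Import all_reals.
From mathcomp Require Import ring lra.
Import Order.TTheory GRing.Theory Num.Theory.
Local Open Scope ring_scope.
Set Implicit Arguments. Unset Strict Implicit. Unset Printing Implicit Defensive.
Section Main.
Variable R : realType.
Variable K : nat.
Variable i0 : 'I_K.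
Variables (p : 'I_K -> R) (q : 'I_K -> 'I_K -> R).

Definition e0 : 'I_K * option nat := (i0, None).
Definition ty (c : config K) (w : nat) : 'I_K := (nth e0 c w).1.

Lemma zip_iota (c : config K) :
  zip (iota 0 (size c)) c = [seq (w, nth e0 c w) | w <- iota 0 (size c)].
Proof.
apply: (eq_from_nth (x0 := (0%N, e0))).
  by rewrite size_zip size_map size_iota minnn.
move=> w; rewrite size_zip size_iota minnn => hw.
by rewrite nth_zip ?size_iota // (nth_map 0%N) ?size_iota // nth_iota.
Qed.

Lemma vertsE (c : config K) j : verts_of_type c j = [seq w <- iota 0 (size c) | ty c w == j].
Proof.
rewrite /verts_of_type zip_iota filter_map -map_comp /=.
by rewrite map_id_in.
Qed.

Lemma mem_verts (c : config K) j v : (v \in verts_of_type c j) = (v < size c)%N && (ty c v == j).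
Proof. by rewrite vertsE mem_filter mem_iota add0n andbC. Qed.

Lemma uniq_verts (c : config K) j : uniq (verts_of_type c j).
Proof. by rewrite vertsE filter_uniq // iota_uniq. Qed.

Lemma ty_rcons (c : config K) e w : (w < size c)%N -> ty (rcons c e) w = ty c w.
Proof. by move=> hw; rewrite /ty nth_rcons hw. Qed.

Lemma verts_rcons (c : config K) e j : verts_of_type (rcons c e) j =
  if e.1 == j then rcons (verts_of_type c j) (size c) else verts_of_type c j.
Proof.
rewrite !vertsE size_rcons -addn1 iotaD add0n filter_cat /=.
have -> : [seq w <- iota 0 (size c) | ty (rcons c e) w == j] =
          [seq w <- iota 0 (size c) | ty c w == j].
  apply: eq_in_filter => w; rewrite mem_iota add0n => /andP [_ hw].
  by rewrite ty_rcons.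
rewrite /ty nth_rcons ltnn eqxx /=.
by case: (e.1 == j); rewrite ?cats1 ?cats0.
Qed.

Lemma outdeg_rcons (c : config K) e w : outdeg (rcons c e) w = (outdeg c w + (e.2 == Some w))%N.
Proof. by rewrite /outdeg -cats1 count_cat /= addn0. Qed.

Definition Ex (d : dist R K) (f : config K -> R) := \sum_(x <- d) x.1 * f x.2.

Definition S (f : config K -> R) (c : config K) : R :=
  \sum_(i <- enum 'I_K) \sum_(j <- enum 'I_K) \sum_(v <- verts_of_type c j)
    (p i * q i j / (size (verts_of_type c j))%:R * f (rcons c (i, Some v))).

Lemma Ex_step d f : Ex (step p q d) f = Ex d (S f).
Proof.
rewrite /Ex /step big_flatten /= big_map; apply: eq_bigr => x _.
rewrite big_flatten big_map /S big_distrr; apply: eq_bigr => i _.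
rewrite big_flatten big_map big_distrr; apply: eq_bigr => j _.
rewrite big_map big_distrr; apply: eq_bigr => v _.
by rewrite /= !mulrA.
Qed.

Hypothesis hp0 : forall i, 0 <= p i.
Hypothesis hp1 : \sum_i p i = 1.
Hypothesis hq0 : forall i j, 0 <= q i j.
Hypothesis hq1 : forall i, \sum_j q i j = 1.

Lemma sum_enum (F : 'I_K -> R) : \sum_(i <- enum 'I_K) F i = \sum_i F i.
Proof. by rewrite big_enum. Qed.

Definition Mj (c : config K) j : R := (size (verts_of_type c j))%:R.
Definition aj j : R := \sum_i p i * q i j.

Lemma sum_const_seq (T : Type) (s : seq T) (a : R) : \sum_(v <- s) a = (size s)%:R * a.
Proof. by rewrite big_const_seq count_predT iter_addr_0 mulr_natl. Qed.

Lemma S_decomp (F : config K -> R) c A (B : 'I_K -> R) (G : nat -> R) :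
  (forall j, (0 < size (verts_of_type c j))%N) ->
  (forall i j v, v \in verts_of_type c j -> F (rcons c (i, Some v)) = A + B i + G v) ->
  S F c = A + \sum_i p i * B i + \sum_j (aj j / Mj c j * \sum_(v <- verts_of_type c j) G v).
Proof.
move=> hM hF.
have e1 : forall i j, \sum_(v <- verts_of_type c j)
    (p i * q i j / (size (verts_of_type c j))%:R * F (rcons c (i, Some v))) =
    p i * q i j * (A + B i) + p i * q i j / Mj c j * \sum_(v <- verts_of_type c j) G v.
  move=> i j.
  rewrite (eq_big_seq (fun v => p i * q i j / Mj c j * (A + B i) + p i * q i j / Mj c j * G v)); last first.
    by move=> v hv; rewrite (hF i j v hv) mulrDr.
  rewrite big_split /= sum_const_seq -big_distrr /=.
  congr (_ + _); rewrite /Mj; field.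
  by rewrite pnatr_eq0 -lt0n.
rewrite /S sum_enum.
rewrite (eq_bigr (fun i => \sum_j (p i * q i j * (A + B i) + p i * q i j / Mj c j * \sum_(v <- verts_of_type c j) G v))); last first.
  by move=> i _; rewrite sum_enum; apply: eq_bigr => j _; rewrite e1.
rewrite (eq_bigr (fun i => p i * (A + B i) + \sum_j (p i * q i j / Mj c j * \sum_(v <- verts_of_type c j) G v))); last first.
  move=> i _; rewrite big_split /=; congr (_ + _).
  rewrite (eq_bigr (fun j => p i * (A + B i) * q i j)); last by move=> j _; rewrite mulrAC.
  by rewrite -big_distrr /= hq1 mulr1.
rewrite big_split /= exchange_big /=.
rewrite (eq_bigr (fun i => A * p i + p i * B i)); last by move=> i _; rewrite mulrDr mulrC.
rewrite big_split /= -big_distrr /= hp1 mulr1; congr (_ + _).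
apply: eq_bigr => j _; rewrite /aj big_distrl /= big_distrl /=.
by apply: eq_bigr => i _.
Qed.
Lemma S_le (F G : config K -> R) c :
  (forall i j v, v \in verts_of_type c j -> F (rcons c (i, Some v)) <= G (rcons c (i, Some v))) ->
  S F c <= S G c.
Proof.
move=> h; rewrite /S; apply: ler_sum => i _; apply: ler_sum => j _.
rewrite big_seq_cond [X in _ <= X]big_seq_cond; apply: ler_sum => v /andP [hv _].
apply: ler_wpM2l; last exact: (h i j v hv).
by apply: divr_ge0; [apply: mulr_ge0 | apply: ler0n].
Qed.

Lemma S_sq (F : config K -> R) c A (B : 'I_K -> R) (G : nat -> R) Dm :
  (forall j, (0 < size (verts_of_type c j))%N) ->
  (forall i j v, v \in verts_of_type c j -> F (rcons c (i, Some v)) = A + B i + G v) ->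
  (forall i j v, v \in verts_of_type c j -> `|F (rcons c (i, Some v)) - F c| <= Dm) ->
  S (fun c' => F c' ^+ 2) c <= F c ^+ 2 + 2 * F c * (S F c - F c) + Dm ^+ 2.
Proof.
move=> hM hF hD.
apply: (le_trans (y := S (fun c' => F c ^+ 2 + 2 * F c * (F c' - F c) + Dm ^+ 2) c)).
  apply: S_le => i j v hv.
  set d := F (rcons c (i, Some v)) - F c.
  have -> : F (rcons c (i, Some v)) = F c + d by rewrite /d addrC subrK.
  have hd : d ^+ 2 <= Dm ^+ 2.
    have h1 := hD i j v hv.
    have h2 : 0 <= Dm by exact: (le_trans (normr_ge0 _) h1).
    rewrite -real_normK ?num_real // ler_sqr ?nnegrE //.
  lra.
rewrite (S_decomp (A := F c ^+ 2 + 2 * F c * (A - F c) + Dm ^+ 2)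
   (B := fun i => 2 * F c * B i) (G := fun v => 2 * F c * G v)) //; last first.
  by move=> i j v hv; rewrite (hF i j v hv); ring.
rewrite (S_decomp hM hF) /=.
have E1 : \sum_i p i * (2 * F c * B i) = 2 * F c * \sum_i p i * B i.
  by rewrite big_distrr; apply: eq_bigr => i _ /=; ring.
have E2 : \sum_j aj j / Mj c j * \sum_(v <- verts_of_type c j) (2 * F c * G v) =
   2 * F c * \sum_j aj j / Mj c j * \sum_(v <- verts_of_type c j) G v.
  rewrite big_distrr; apply: eq_bigr => j _ /=.
  by rewrite -big_distrr /=; ring.
rewrite E1 E2 -subr_ge0; match goal with |- is_true (0 <= ?e) => have -> : e = 0 by ring end; done.
Qed.
Definition Nj j m (c : config K) : R := \sum_(v <- verts_of_type c j) (outdeg c v == m)%:R.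
Definition prevN j m (c : config K) : R := if m is m'.+1 then Nj j m' c else 0.

Definition good (c : config K) :=
  (forall j, (0 < size (verts_of_type c j))%N) /\
  (forall e v, e \in c -> e.2 = Some v -> (v < size c)%N).

Lemma outdeg_new (c : config K) : good c -> outdeg c (size c) = 0%N.
Proof.
move=> [_ hpar]; rewrite /outdeg; apply/eqP; rewrite -leqn0 leqNgt -has_count.
apply/hasPn => e he; apply/negP => /eqP h.
by have := hpar e (size c) he h; rewrite ltnn.
Qed.

Lemma sum_pred1_seq (s : seq nat) (v : nat) (H : nat -> R) : uniq s ->
  \sum_(w <- s) (v == w)%:R * H w = (v \in s)%:R * H v.
Proof.
elim: s => [|x s IH] /=; first by rewrite big_nil mul0r.
move=> /andP [hx hu]; rewrite big_cons IH // in_cons.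
case: (eqVneq v x) => [->|hvx] /=.
  by rewrite (negbTE hx) /= mul0r addr0 mul1r.
by rewrite mul0r add0r.
Qed.

Lemma sum_pred1_ord (j0 : 'I_K) (F : 'I_K -> R) :
  \sum_j (j == j0)%:R * F j = F j0.
Proof.
rewrite (bigD1 j0) //= eqxx mul1r big1 ?addr0 // => j /negbTE ->.
by rewrite mul0r.
Qed.

Lemma verts_ty (c : config K) j v : v \in verts_of_type c j -> ty c v = j.
Proof. by rewrite mem_verts => /andP [_ /eqP]. Qed.

Lemma verts_lt (c : config K) j v : v \in verts_of_type c j -> (v < size c)%N.
Proof. by rewrite mem_verts => /andP []. Qed.

Definition Gd j0 m (c : config K) (v : nat) : R :=
  (ty c v == j0)%:R * ((outdeg c v + 1 == m)%N%:R - (outdeg c v == m)%:R).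

Lemma Nj_succ (c : config K) j0 m i j v : good c -> v \in verts_of_type c j ->
  Nj j0 m (rcons c (i, Some v)) =
  Nj j0 m c + (i == j0)%:R * (m == 0%N)%:R + Gd j0 m c v.
Proof.
move=> hg hv; have hvn := verts_lt hv.
have E : \sum_(w <- verts_of_type c j0) (outdeg (rcons c (i, Some v)) w == m)%:R =
    Nj j0 m c + Gd j0 m c v.
  rewrite (eq_bigr (fun w => (outdeg c w == m)%:R +
      (v == w)%:R * ((outdeg c w + 1 == m)%N%:R - (outdeg c w == m)%:R))); last first.
    move=> w _; rewrite outdeg_rcons /=.
    have hS : forall a b : nat, (Some a == Some b) = (a == b) by [].
    case: (eqVneq v w) => [->|hvw] /=; rewrite hS.
      by rewrite eqxx mul1r addrC subrK.
    by rewrite (negbTE hvw) addn0 mul0r addr0.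
  rewrite big_split /= sum_pred1_seq ?uniq_verts //.
  by rewrite mem_verts hvn.
rewrite {1}/Nj verts_rcons /=.
have hS : forall a b : nat, (Some a == Some b) = (a == b) by [].
move: E; case: (eqVneq i j0) => [->|hij] E /=.
  rewrite -cats1 big_cat big_seq1 /= E outdeg_rcons outdeg_new // /= hS.
  rewrite (_ : (v == size c) = false); last first.
    by apply/negbTE; apply/eqP => h; move: hvn; rewrite h ltnn.
  by rewrite mul1r add0n; clear E; case: m => [|m] /=; rewrite ?addr0; ring.
by rewrite E mul0r addr0.
Qed.

Lemma Mj_succ (c : config K) j0 i v :
  Mj (rcons c (i, Some v)) j0 = Mj c j0 + (i == j0)%:R.
Proof.
rewrite /Mj verts_rcons /=; case: (i == j0); rewrite ?size_rcons ?addr0 //.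
by rewrite -addn1 natrD.
Qed.

Lemma sum_Gd (c : config K) j0 m j :
  \sum_(v <- verts_of_type c j) Gd j0 m c v =
  (j == j0)%:R * (prevN j0 m c - Nj j0 m c).
Proof.
rewrite (eq_big_seq (fun v => (j == j0)%:R *
   ((outdeg c v + 1 == m)%N%:R - (outdeg c v == m)%:R))); last first.
  by move=> v hv; rewrite /Gd (verts_ty hv).
rewrite -big_distrr /=; case: (eqVneq j j0) => [->|_]; last by rewrite !mul0r.
rewrite sumrB; congr (_ * (_ - _)).
case: m => [|m] /=.
  by rewrite big1 // => v _; rewrite addn1.
by rewrite /Nj; apply: eq_bigr => v _; rewrite addn1 eqSS.
Qed.
Lemma mulB_le (u z B : R) : `|u| <= B -> u * z <= B * `|z|.
Proof.
move=> hu; apply: (le_trans (ler_norm _)); rewrite normrM.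
by apply: ler_wpM2r => //; exact: normr_ge0.
Qed.

Lemma core_ineq (N Pv M P g gp a : R) :
  0 <= N -> N <= M -> 0 <= Pv -> Pv <= M -> 0 < M ->
  0 <= g -> g <= 1 -> 0 <= gp -> gp <= 1 -> 0 <= a ->
  (N - g * P) * (a * ((Pv - N) / M - (gp - g))) <=
  a * (`|Pv - gp * P| + 3 * `|M - P|).
Proof.
move=> hN hNM hPv hPvM hM hg hg1 hgp hgp1 ha.
set u := N / M - g; set v := Pv / M - gp; set Y := M - P; set Xp := Pv - gp * P.
have hM0 : M != 0 by rewrite gt_eqF.
have hu0 : 0 <= N / M <= 1.
  by apply/andP; split; [apply: divr_ge0 => //; exact: ltW | rewrite ler_pdivrMr // mul1r].
have hv0 : 0 <= Pv / M <= 1.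
  by apply/andP; split; [apply: divr_ge0 => //; exact: ltW | rewrite ler_pdivrMr // mul1r].
have hu : `|u| <= 1.
  by rewrite ler_norml; move/andP: hu0 => [h1 h2]; rewrite /u; apply/andP; split; lra.
have hv : `|v| <= 1.
  by rewrite ler_norml; move/andP: hv0 => [h1 h2]; rewrite /v; apply/andP; split; lra.
have E : (N - g * P) * ((Pv - N) / M - (gp - g)) =
   u * Xp + (- (u * gp)) * Y - M * u ^+ 2 + (g * (v - u)) * Y.
  by rewrite /u /v /Xp /Y; field.
rewrite mulrCA E; apply: ler_wpM2l => //.
have h1 := mulB_le Xp hu.
have h2 : `|- (u * gp)| <= 1.
  rewrite normrN normrM; apply: (le_trans (y := 1 * `|gp|)).
    by apply: ler_wpM2r => //; exact: normr_ge0.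
  by rewrite mul1r ger0_norm.
have h3 := mulB_le Y h2.
have h4 : `|g * (v - u)| <= 2.
  rewrite normrM ger0_norm //; apply: (le_trans (y := 1 * 2)); last by rewrite mul1r.
  apply: ler_pM; [exact: hg | exact: normr_ge0 | exact: hg1 | ].
  by apply: (le_trans (ler_normB _ _)); lra.
have h5 := mulB_le Y h4.
have h6 : 0 <= M * u ^+ 2 by apply: mulr_ge0; [exact: ltW | exact: sqr_ge0].
lra.
Qed.
Definition Xf j0 m (cm : R) (c : config K) : R := Nj j0 m c - cm * (size c)%:R.
Definition Yf j0 (c : config K) : R := Mj c j0 - p j0 * (size c)%:R.

Lemma size_succR (c : config K) e : ((size (rcons c e))%:R : R) = (size c)%:R + 1.
Proof. by rewrite size_rcons -addn1 natrD. Qed.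

Lemma sum_pred1_p j0 (b : R) : \sum_i p i * ((i == j0)%:R * b) = p j0 * b.
Proof.
rewrite (eq_bigr (fun i => (i == j0)%:R * (p i * b))); last by move=> i _; ring.
exact: sum_pred1_ord.
Qed.

Lemma S_Xf (c : config K) j0 m cm : good c ->
  S (Xf j0 m cm) c = Xf j0 m cm c - cm + p j0 * (m == 0%N)%:R +
     aj j0 / Mj c j0 * (prevN j0 m c - Nj j0 m c).
Proof.
move=> hg; have hM := hg.1.
rewrite (S_decomp (A := Xf j0 m cm c - cm) (B := fun i => (i == j0)%:R * (m == 0%N)%:R)
   (G := Gd j0 m c)) //; last first.
  by move=> i j v hv; rewrite /Xf (Nj_succ _ _ _ hg hv) size_succR; ring.
rewrite sum_pred1_p.
rewrite (eq_bigr (fun j => (j == j0)%:R * (aj j / Mj c j * (prevN j0 m c - Nj j0 m c)))); last first.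
  by move=> j _; rewrite sum_Gd; ring.
by rewrite sum_pred1_ord.
Qed.

Lemma S_Yf (c : config K) j0 : good c -> S (Yf j0) c = Yf j0 c.
Proof.
move=> hg; have hM := hg.1.
rewrite (S_decomp (A := Yf j0 c - p j0) (B := fun i => (i == j0)%:R) (G := fun _ => 0)) //; last first.
  by move=> i j v hv; rewrite /Yf Mj_succ size_succR; ring.
rewrite (eq_bigr (fun i => (i == j0)%:R * p i)); last by move=> i _; ring.
rewrite sum_pred1_ord big1 ?addr0; first ring.
by move=> j _; rewrite big1 ?mulr0.
Qed.

Lemma S_one (c : config K) : good c -> S (fun _ => 1) c = 1.
Proof.
move=> hg; have hM := hg.1.
rewrite (S_decomp (A := 1) (B := fun i => 0) (G := fun _ => 0)) //; last first.
  by move=> *; rewrite !addr0.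
rewrite big1 ?addr0; last by move=> i _; rewrite mulr0.
by rewrite big1 ?addr0 // => j _; rewrite big1 ?mulr0.
Qed.

Lemma p_le1 j : p j <= 1.
Proof.
rewrite -hp1 (bigD1 j) //= lerDl; apply: sumr_ge0 => i _; exact: hp0.
Qed.

Lemma ind_ge0 (b : bool) : 0 <= (b%:R : R). Proof. by case: b. Qed.
Lemma ind_le1 (b : bool) : (b%:R : R) <= 1. Proof. by case: b. Qed.

Lemma S_Y2 (c : config K) j0 : good c ->
  S (fun c' => Yf j0 c' ^+ 2) c <= Yf j0 c ^+ 2 + 1.
Proof.
move=> hg; have hM := hg.1.
have hF : forall i j v, v \in verts_of_type c j ->
    Yf j0 (rcons c (i, Some v)) = (Yf j0 c - p j0) + (i == j0)%:R + (fun _ => 0) v.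
  by move=> i j v hv; rewrite /Yf Mj_succ size_succR; ring.
have := S_sq (Dm := 1) hM hF.
rewrite S_Yf // subrr mulr0 addr0 expr1n; apply.
move=> i j v hv; rewrite (hF i j v hv) /=.
have h1 := p_le1 j0; have h2 := hp0 j0.
have h3 := ind_ge0 (i == j0); have h4 := ind_le1 (i == j0).
rewrite ler_norml; apply/andP; split; lra.
Qed.

Lemma Nj_ge0 j m (c : config K) : 0 <= Nj j m c.
Proof. by apply: sumr_ge0 => v _; exact: ind_ge0. Qed.

Lemma Nj_leM j m (c : config K) : Nj j m c <= Mj c j.
Proof.
rewrite /Mj -[X in _ <= X]mulr1 -sum_const_seq; apply: ler_sum => v _; exact: ind_le1.
Qed.

Lemma prevN_ge0 j m (c : config K) : 0 <= prevN j m c.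
Proof. by case: m => [|m] //=; exact: Nj_ge0. Qed.

Lemma prevN_leM j m (c : config K) : prevN j m c <= Mj c j.
Proof. by case: m => [|m] /=; [exact: ler0n | exact: Nj_leM]. Qed.

Lemma Gd_abs j0 m (c : config K) v : `|Gd j0 m c v| <= 1.
Proof.
rewrite /Gd; case: (ty c v == j0); case: (outdeg c v + 1 == m)%N;
  case: (outdeg c v == m); rewrite /= ?mul0r ?mul1r ?subrr ?normr0 ?ler01 //;
  by rewrite ler_norml; apply/andP; split; simpl; lra.
Qed.
Definition rj j0 := aj j0 / p j0.
Definition gg j0 m := (1 + rj j0)^-1 * (rj j0 / (1 + rj j0)) ^+ m.
Definition ggp j0 m := if m is m'.+1 then gg j0 m' else 0.
Definition Xm j0 m (c : config K) := Xf j0 m (p j0 * gg j0 m) c.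
Definition Xprev j0 m (c : config K) := if m is m'.+1 then Xm j0 m' c else 0.

Lemma aj_ge0 j : 0 <= aj j.
Proof. by apply: sumr_ge0 => i _; apply: mulr_ge0. Qed.

Lemma rj_ge0 j0 : 0 <= rj j0.
Proof. by apply: divr_ge0; [exact: aj_ge0 | exact: hp0]. Qed.

Lemma gg_bnd j0 m : 0 <= gg j0 m /\ gg j0 m <= 1.
Proof.
have hr := rj_ge0 j0; set r := rj j0 in hr *.
have h1 : 0 < 1 + r by lra.
have i0' : 0 <= (1 + r)^-1 <= 1.
  apply/andP; split; first by rewrite invr_ge0; exact: ltW.
  by rewrite invf_le1 //; lra.
have i1 : 0 <= r / (1 + r) <= 1.
  apply/andP; split; first by apply: divr_ge0 => //; exact: ltW.
  by rewrite ler_pdivrMr // mul1r; lra.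
move/andP: i0' => [a1 a2]; move/andP: i1 => [b1 b2].
rewrite /gg -/r; split; first by apply: mulr_ge0 => //; exact: exprn_ge0.
apply: mulr_ile1 => //; [exact: exprn_ge0 | exact: exprn_ile1].
Qed.

Lemma ggp_bnd j0 m : 0 <= ggp j0 m /\ ggp j0 m <= 1.
Proof. by case: m => [|m] /=; [split; [exact: lexx | exact: ler01] | exact: gg_bnd]. Qed.

Lemma gg_id j0 m : 0 < p j0 ->
  p j0 * gg j0 m = aj j0 * (ggp j0 m - gg j0 m) + p j0 * (m == 0%N)%:R.
Proof.
move=> hp.
have hr := rj_ge0 j0.
have ha : aj j0 = rj j0 * p j0 by rewrite /rj divfK // gt_eqF.
rewrite ha /ggp /gg; set r := rj j0 in hr *.
have h1 : 1 + r != 0 by rewrite gt_eqF //; lra.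
case: m => [|m] /=.
  by rewrite expr0 mulr1; field.
rewrite exprS; set t := (r / (1 + r)) ^+ m; field => //.
Qed.

Lemma S_X2 (c : config K) j0 m : good c -> 0 < p j0 ->
  S (fun c' => Xm j0 m c' ^+ 2) c <=
  Xm j0 m c ^+ 2 + 2 * aj j0 * (`|Xprev j0 m c| + 3 * `|Yf j0 c|) + 9.
Proof.
move=> hg hp; have hM := hg.1.
set cm := p j0 * gg j0 m.
have hF : forall i j v, v \in verts_of_type c j ->
    Xm j0 m (rcons c (i, Some v)) =
    (Xm j0 m c - cm) + (i == j0)%:R * (m == 0%N)%:R + Gd j0 m c v.
  by move=> i j v hv; rewrite /Xm /Xf /cm (Nj_succ _ _ _ hg hv) size_succR; ring.
have hcm : 0 <= cm <= 1.
  have [g1 g2] := gg_bnd j0 m; have := p_le1 j0; have := hp0 j0.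
  by move=> *; rewrite /cm mulr_ge0 //= mulr_ile1.
have := S_sq (Dm := 3) hM hF.
have -> : S (Xm j0 m) c - Xm j0 m c =
    aj j0 * ((prevN j0 m c - Nj j0 m c) / Mj c j0 - (ggp j0 m - gg j0 m)).
  rewrite /Xm S_Xf // -/cm.
  have E := gg_id m hp; rewrite -/cm in E.
  rewrite E; have : Mj c j0 != 0 by rewrite /Mj pnatr_eq0 -lt0n.
  by move=> hM0; field.
move=> H; apply: (le_trans (H _)); last first.
  have hMpos : 0 < Mj c j0 by rewrite /Mj ltr0n.
  have [g1 g2] := gg_bnd j0 m; have [g3 g4] := ggp_bnd j0 m.
  have := @core_ineq (Nj j0 m c) (prevN j0 m c) (Mj c j0) (p j0 * (size c)%:R)
     (gg j0 m) (ggp j0 m) (aj j0) (Nj_ge0 j0 m c) (Nj_leM j0 m c) (prevN_ge0 j0 m c) (prevN_leM j0 m c)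
     hMpos g1 g2 g3 g4 (aj_ge0 j0).
  have EX : Xm j0 m c = Nj j0 m c - gg j0 m * (p j0 * (size c)%:R).
    by rewrite /Xm /Xf; ring.
  have EP : `|prevN j0 m c - ggp j0 m * (p j0 * (size c)%:R)| = `|Xprev j0 m c|.
    by clear H; case: m {cm hF hcm EX g1 g2 g3 g4} => [|m] /=; rewrite ?mul0r ?subr0 ?normr0 // /Xm /Xf;
      congr (`| _ |); ring.
  rewrite EP -EX /Yf => h.
  have -> : (3 : R) ^+ 2 = 9 by rewrite expr2; lra.
  lra.
move=> i j v hv; rewrite (hF i j v hv).
have -> : Xm j0 m c - cm + (i == j0)%:R * (m == 0%N)%:R + Gd j0 m c v - Xm j0 m c =
   - cm + (i == j0)%:R * (m == 0%N)%:R + Gd j0 m c v by ring.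
have h1 := Gd_abs j0 m c v.
have h2 : `|(i == j0)%:R * (m == 0%N)%:R : R| <= 1.
  by case: (i == j0); case: (m == 0%N); rewrite /= ?mul0r ?mul1r ?normr0 ?normr1.
apply: (le_trans (ler_normD _ _)); apply: (le_trans (lerD (ler_normD _ _) (lexx _))).
rewrite normrN (ger0_norm (proj1 (andP hcm))).
move/andP: hcm => [c1 c2]; lra.
Qed.
Lemma good_succ (c : config K) i j v : good c -> v \in verts_of_type c j ->
  good (rcons c (i, Some v)).
Proof.
move=> [hM hpar] hv; split.
  move=> j'; rewrite verts_rcons /=; case: (i == j'); rewrite ?size_rcons //.
move=> e w; rewrite mem_rcons in_cons size_rcons => /orP [/eqP -> /= [<-]|he hw].
  by apply: ltnW; rewrite ltnS; exact: (verts_lt hv).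
by apply: ltnW; rewrite ltnS; exact: (hpar e w he hw).
Qed.

Lemma mem_step d x : x \in step p q d -> exists y i j v,
  [/\ y \in d, v \in verts_of_type y.2 j &
      x = (y.1 * p i * q i j / (size (verts_of_type y.2 j))%:R, rcons y.2 (i, Some v))].
Proof.
case/flattenP => s1 /mapP [y hy ->] /flattenP [s2 /mapP [i _ ->]] /flattenP [s3 /mapP [j _ ->]].
case/mapP => v hv ->; by exists y, i, j, v.
Qed.

Lemma rec_trees_prop m t : t \in rec_trees m ->
  size t = m /\ (forall o v, o \in t -> o = Some v -> (v < m)%N).
Proof.
elim: m t => [|m IH] t /=.
  by rewrite inE => /eqP ->.
case: m IH => [|m] IH.
  by rewrite inE => /eqP -> /=; split => // o v; rewrite inE => /eqP ->.
case/flattenP => s /mapP [t' ht' ->] /mapP [v hv ->].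
have [h1 h2] := IH t' ht'; split; first by rewrite size_rcons h1.
move=> o w; rewrite mem_rcons in_cons => /orP [/eqP -> [<-]|ho hw].
  by move: hv; rewrite mem_iota add0n => /andP [_ /ltnW].
by apply: ltnW; rewrite ltnS; exact: (h2 o w ho hw).
Qed.

Lemma mem_init x : x \in init_law R K -> 0 <= x.1 /\ good x.2 /\ size x.2 = K.
Proof.
case/flattenP => s1 /mapP [t ht ->] /mapP [s _ ->] /=.
have [h1 h2] := rec_trees_prop ht.
have hs : size [seq s i | i <- enum 'I_K] = K by rewrite size_map size_enum_ord.
have hz : size (zip [seq s i | i <- enum 'I_K] t) = K by rewrite size_zip hs h1 minnn.
split; first by rewrite invr_ge0; apply: mulr_ge0; exact: ler0n.
split => //; split.
  move=> j; rewrite vertsE size_filter -has_count; apply/hasP.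
  exists (val ((s^-1)%g j)); first by rewrite mem_iota hz add0n ltn_ord.
  rewrite /ty /e0 -[(i0, None)]/(i0, None) nth_zip ?hs ?h1 //=.
  rewrite (nth_map i0) ?size_enum_ord ?ltn_ord // nth_ord_enum.
  by rewrite permKV.
move=> e v he hev; rewrite hz; apply: (h2 e.2 v) => //.
have : e.2 \in unzip2 (zip [seq s i | i <- enum 'I_K] t) by apply: map_f.
by rewrite unzip2_zip // hs h1.
Qed.

Lemma Ex_init1 : Ex (init_law R K) (fun _ => 1) <= 1.
Proof.
rewrite /Ex /init_law big_flatten /= big_map.
rewrite (eq_bigr (fun _ => ((#|{perm 'I_K}|)%:R * (size (rec_trees K))%:R)^-1 *
                          (size (enum {perm 'I_K}))%:R)); last first.
  move=> t _; rewrite big_map (eq_bigr (fun _ => ((#|{perm 'I_K}|)%:R * (size (rec_trees K))%:R)^-1)); last by move=> *; rewrite mulr1.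
  by rewrite sum_const_seq mulrC.
rewrite sum_const_seq -cardE.
set a := (#|{perm 'I_K}|)%:R; set b := (size (rec_trees K))%:R.
have -> : b * ((a * b)^-1 * a) = (a * b) * (a * b)^-1 by ring.
case: (eqVneq (a * b) 0) => [->|h]; first by rewrite mul0r ler01.
by rewrite mulfV.
Qed.
Definition law n := cmrt_law p q n.

Lemma law_succ n : (K <= n)%N -> law n.+1 = step p q (law n).
Proof. by move=> h; rewrite /law /cmrt_law subSn. Qed.

Lemma Ex_eq_in d (f g : config K -> R) : (forall x, x \in d -> f x.2 = g x.2) -> Ex d f = Ex d g.
Proof. by move=> h; apply: eq_big_seq => x hx; rewrite h. Qed.

Lemma Ex_le_in d (f g : config K -> R) : (forall x, x \in d -> 0 <= x.1) ->
  (forall x, x \in d -> f x.2 <= g x.2) -> Ex d f <= Ex d g.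
Proof.
move=> h0 h; rewrite /Ex big_seq_cond [X in _ <= X]big_seq_cond.
by apply: ler_sum => x /andP [hx _]; apply: ler_wpM2l; [exact: h0 | exact: h].
Qed.

Lemma Ex_add d (f g : config K -> R) : Ex d (fun c => f c + g c) = Ex d f + Ex d g.
Proof. by rewrite /Ex -big_split /=; apply: eq_bigr => x _; rewrite mulrDr. Qed.

Lemma Ex_scal d (a : R) (f : config K -> R) : Ex d (fun c => a * f c) = a * Ex d f.
Proof. by rewrite /Ex big_distrr /=; apply: eq_bigr => x _; rewrite mulrCA. Qed.

Lemma Ex_const d (a : R) : Ex d (fun _ => a) = a * Ex d (fun _ => 1).
Proof. by rewrite -Ex_scal; apply: eq_bigr => x _; rewrite mulr1. Qed.

Lemma Ex_sum d (F : 'I_K -> config K -> R) : Ex d (fun c => \sum_j F j c) = \sum_j Ex d (F j).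
Proof.
rewrite /Ex exchange_big /=; apply: eq_bigr => x _; by rewrite big_distrr.
Qed.

Definition inv n := (forall x, x \in law n -> [/\ 0 <= x.1, good x.2 & size x.2 = n]) /\
  Ex (law n) (fun _ => 1) <= 1.

Lemma inv_all n : (K <= n)%N -> inv n.
Proof.
move=> hn; rewrite -(subnKC hn); elim: (n - K)%N => [|d [IH1 IH2]].
  rewrite addn0 /inv /law /cmrt_law subnn /=; split; last exact: Ex_init1.
  by move=> x hx; have [h1 [h2 h3]] := mem_init hx; split.
rewrite addnS /inv law_succ ?leq_addr //; split.
  move=> x /mem_step [y [i [j [v [hy hv ->]]]]] /=.
  have [h1 h2 h3] := IH1 y hy; split; last by rewrite size_rcons h3.
    by apply: divr_ge0; [apply: mulr_ge0; [apply: mulr_ge0 | ] | exact: ler0n].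
  exact: (good_succ i h2 hv).
rewrite Ex_step (Ex_eq_in (g := fun _ => 1)) //.
by move=> x hx; have [_ h2 _] := IH1 x hx; exact: S_one.
Qed.

Lemma Ex_step_le n (f g : config K -> R) : (K <= n)%N ->
  (forall c, good c -> size c = n -> S f c <= g c) ->
  Ex (law n.+1) f <= Ex (law n) g.
Proof.
move=> hn h; have [h1 _] := inv_all hn.
rewrite law_succ // Ex_step; apply: Ex_le_in.
  by move=> x hx; have [] := h1 x hx.
by move=> x hx; have [_ hg hs] := h1 x hx; exact: h.
Qed.
Definition small2 (e : nat -> R) := forall dl, 0 < dl ->
  exists N, forall n, (N <= n)%N -> e n <= dl * (n%:R) ^+ 2.
Definition lin (b : nat -> R) := forall dl, 0 < dl ->
  exists N, forall n, (N <= n)%N -> b n <= dl * n%:R.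

Lemma archi_nat (B : R) : exists N : nat, forall n, (N <= n)%N -> B <= n%:R.
Proof.
case: (lerP 0 B) => hB.
  exists (Num.Def.archi_bound B) => n hn.
  apply: ltW; apply: (lt_le_trans (archi_boundP hB)); by rewrite ler_nat.
by exists 0%N => n _; apply: ltW; apply: (lt_le_trans hB); exact: ler0n.
Qed.

Lemma L_growth K0 (e b : nat -> R) C :
  (forall n, (K0 <= n)%N -> e n.+1 <= e n + b n + C) -> lin b -> small2 e.
Proof.
move=> he hb dl hdl.
have hdl2 : 0 < dl / 2 by apply: divr_gt0.
have [N1 hN1] := hb _ hdl2.
set N0 := maxn K0 N1.
set A := `|e N0|; set C' := `|C|.
have hA : 0 <= A by exact: normr_ge0.
have hC' : 0 <= C' by exact: normr_ge0.
have claim : forall d, e (N0 + d)%N <= A + C' * (N0 + d)%:R + dl / 2 * ((N0 + d)%:R) ^+ 2.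
  elim => [|d IH].
    rewrite addn0.
    have h1 : e N0 <= A by exact: ler_norm.
    have h2 : 0 <= C' * N0%:R by apply: mulr_ge0 => //; exact: ler0n.
    have h3 : 0 <= dl / 2 * N0%:R ^+ 2 by apply: mulr_ge0; [exact: ltW | exact: sqr_ge0].
    lra.
  rewrite addnS.
  have hK : (K0 <= N0 + d)%N by apply: (leq_trans (leq_maxl _ _)); exact: leq_addr.
  have hN : (N1 <= N0 + d)%N by apply: (leq_trans (leq_maxr _ _)); exact: leq_addr.
  have h := he _ hK; have hb' := hN1 _ hN.
  have hC : C <= C' by exact: ler_norm.
  rewrite -natr1; set x := (N0 + d)%:R in IH hb' *.
  have hx : 0 <= x by exact: ler0n.
  have e1 : dl / 2 * (x + 1) ^+ 2 = dl / 2 * x ^+ 2 + dl / 2 * x + dl / 2 * x + dl / 2 by ring.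
  have e2 : 0 <= dl / 2 * x by apply: mulr_ge0 => //; exact: ltW.
  rewrite e1 mulrDr mulr1; lra.
have [N2 hN2] := archi_nat (2 * (A + C') / dl).
exists (maxn N0 (maxn N2 1)) => n hn.
have hn0 : (N0 <= n)%N := leq_trans (leq_maxl _ _) hn.
have hn2 : (N2 <= n)%N := leq_trans (leq_maxl _ _) (leq_trans (leq_maxr _ _) hn).
have hn1 : (1 <= n)%N := leq_trans (leq_maxr _ _) (leq_trans (leq_maxr _ _) hn).
have := claim (n - N0)%N; rewrite subnKC // => hc.
set x := n%:R in hc *.
have hx1 : 1 <= x by rewrite /x ler1n.
have hxB := hN2 _ hn2; rewrite -/x in hxB.
have hAC : A + C' <= dl / 2 * x.
  move: hxB; rewrite ler_pdivrMr // => h; lra.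
have h2 : (A + C') * x <= dl / 2 * x * x by apply: ler_wpM2r => //; lra.
have h3 : A <= A * x by rewrite -{1}(mulr1 A); apply: ler_wpM2l.
have -> : dl * x ^+ 2 = dl / 2 * x ^+ 2 + dl / 2 * x * x by rewrite expr2; field.
lra.
Qed.

Lemma abs_le_sq (z l : R) : 0 < l -> `|z| <= l^-1 * z ^+ 2 + l.
Proof.
move=> hl; rewrite -(ler_pM2l hl) mulrDr mulrA mulfV ?gt_eqF // mul1r.
rewrite -real_normK ?num_real //; set t := `|z|.
have ht : 0 <= t by exact: normr_ge0.
nra.
Qed.

Lemma L_abs (d : nat -> dist R K) (Z : config K -> R) K0 :
  (forall n, (K0 <= n)%N -> (forall x, x \in d n -> 0 <= x.1) /\ Ex (d n) (fun _ => 1) <= 1) ->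
  small2 (fun n => Ex (d n) (fun c => Z c ^+ 2)) ->
  lin (fun n => Ex (d n) (fun c => `|Z c|)).
Proof.
move=> hd hs dl hdl.
have hq4 : 0 < dl ^+ 2 / 4 by apply: divr_gt0 => //; exact: exprn_gt0.
have [N hN] := hs (dl ^+ 2 / 4) hq4.
exists (maxn N (maxn K0 1)) => n hn.
have hnN : (N <= n)%N := leq_trans (leq_maxl _ _) hn.
have hnK : (K0 <= n)%N := leq_trans (leq_maxl _ _) (leq_trans (leq_maxr _ _) hn).
have hn1 : (1 <= n)%N := leq_trans (leq_maxr _ _) (leq_trans (leq_maxr _ _) hn).
have [h0 hm] := hd n hnK.
set x := n%:R.
have hx : 0 < x by rewrite /x ltr0n.
set l := dl * x / 2.
have hl : 0 < l by apply: divr_gt0 => //; exact: mulr_gt0.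
apply: (le_trans (Ex_le_in (g := fun c => l^-1 * Z c ^+ 2 + l) h0 _)); last first.
  rewrite Ex_add Ex_scal Ex_const.
  have h1 := hN n hnN; rewrite -/x in h1.
  have h2 : l^-1 * Ex (d n) (fun c => Z c ^+ 2) <= l^-1 * (dl ^+ 2 / 4 * x ^+ 2).
    by apply: ler_wpM2l => //; rewrite invr_ge0; exact: ltW.
  have h3 : l * Ex (d n) (fun _ => 1) <= l * 1 by apply: ler_wpM2l => //; exact: ltW.
  have e : l^-1 * (dl ^+ 2 / 4 * x ^+ 2) = dl * x / 2.
    by rewrite /l; field; rewrite ?gt_eqF //; apply/andP; split; rewrite gt_eqF.
  rewrite e in h2.
  rewrite mulr1 in h3.
  have hs2 : dl * x = l + l by rewrite /l; field.
  lra.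
by move=> c _; exact: abs_le_sq.
Qed.

Lemma lin_add (b1 b2 : nat -> R) : lin b1 -> lin b2 -> lin (fun n => b1 n + b2 n).
Proof.
move=> h1 h2 dl hdl.
have hd2 : 0 < dl / 2 by apply: divr_gt0.
have [N1 H1] := h1 _ hd2; have [N2 H2] := h2 _ hd2.
exists (maxn N1 N2) => n hn.
have := H1 n (leq_trans (leq_maxl _ _) hn); have := H2 n (leq_trans (leq_maxr _ _) hn).
have -> : dl * n%:R = dl / 2 * n%:R + dl / 2 * n%:R by field.
lra.
Qed.

Lemma lin_scal (k : R) (b : nat -> R) : 0 <= k -> lin b -> lin (fun n => k * b n).
Proof.
move=> hk h dl hdl.
have hk1 : 0 < k + 1 by lra.
have [N H] := h (dl / (k + 1)) (divr_gt0 hdl hk1).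
exists N => n hn; have := H n hn => hb.
apply: (le_trans (ler_wpM2l hk hb)).
have hx : 0 <= dl * n%:R by apply: mulr_ge0; [exact: ltW | exact: ler0n].
have -> : k * (dl / (k + 1) * n%:R) = (k / (k + 1)) * (dl * n%:R) by field; lra.
apply: ler_piMl => //; rewrite ler_pdivrMr //; lra.
Qed.

Lemma lin0 : lin (fun _ => 0).
Proof. by move=> dl hdl; exists 0%N => n _; apply: mulr_ge0; [exact: ltW | exact: ler0n]. Qed.

Lemma small2_le K0 (e e' : nat -> R) : (forall n, (K0 <= n)%N -> e n <= e' n) -> small2 e' -> small2 e.
Proof.
move=> h h' dl hdl; have [N H] := h' _ hdl.
exists (maxn N K0) => n hn.
apply: (le_trans (h n (leq_trans (leq_maxr _ _) hn))); exact: H (leq_trans (leq_maxl _ _) hn).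
Qed.

Lemma small2_add (e1 e2 : nat -> R) : small2 e1 -> small2 e2 -> small2 (fun n => e1 n + e2 n).
Proof.
move=> h1 h2 dl hdl.
have hd2 : 0 < dl / 2 by apply: divr_gt0.
have [N1 H1] := h1 _ hd2; have [N2 H2] := h2 _ hd2.
exists (maxn N1 N2) => n hn.
have := H1 n (leq_trans (leq_maxl _ _) hn); have := H2 n (leq_trans (leq_maxr _ _) hn).
have -> : dl * n%:R ^+ 2 = dl / 2 * n%:R ^+ 2 + dl / 2 * n%:R ^+ 2 by field.
lra.
Qed.

Lemma small2_sum (E : 'I_K -> nat -> R) (s : seq 'I_K) :
  (forall j, small2 (E j)) -> small2 (fun n => \sum_(j <- s) E j n).
Proof.
move=> h; elim: s => [|j s IH].
  move=> dl hdl; exists 0%N => n _; rewrite big_nil.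
  by apply: mulr_ge0; [exact: ltW | exact: sqr_ge0].
apply: (small2_le (K0 := 0%N) _ (small2_add (h j) IH)) => n _.
by rewrite big_cons.
Qed.
Lemma inv_w n : (K <= n)%N ->
  (forall x, x \in law n -> 0 <= x.1) /\ Ex (law n) (fun _ => 1) <= 1.
Proof.
move=> hn; have [h1 h2] := inv_all hn; split => // x hx.
by have [] := h1 x hx.
Qed.

Lemma eY_small j0 : small2 (fun n => Ex (law n) (fun c => Yf j0 c ^+ 2)).
Proof.
apply: (L_growth (K0 := K) (b := fun _ => 0) (C := 1)); last exact: lin0.
move=> n hn.
apply: (le_trans (Ex_step_le (g := fun c => Yf j0 c ^+ 2 + 1) hn _)).
  by move=> c hg _; exact: S_Y2.
  have E1 : Ex (law n) (fun c => Yf j0 c ^+ 2 + 1) =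
    Ex (law n) (fun c => Yf j0 c ^+ 2) + Ex (law n) (fun _ => 1) :=
    Ex_add _ (fun c => Yf j0 c ^+ 2) (fun _ => 1).
  rewrite E1 addr0; apply: lerD => //.
by have [] := inv_w hn.
Qed.

Lemma lin_le (b b' : nat -> R) : (forall n, b n <= b' n) -> lin b' -> lin b.
Proof.
move=> h h' dl hdl; have [N H] := h' _ hdl; exists N => n hn.
exact: (le_trans (h n) (H n hn)).
Qed.

Lemma eX_step j0 m : 0 < p j0 ->
  lin (fun n => Ex (law n) (fun c => `|Xprev j0 m c|)) ->
  small2 (fun n => Ex (law n) (fun c => Xm j0 m c ^+ 2)).
Proof.
move=> hp hlin.
have hY := L_abs (K0 := K) inv_w (eY_small j0).
have ha : 0 <= 2 * aj j0 by apply: mulr_ge0; [exact: ler0n | exact: aj_ge0].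
apply: (L_growth (K0 := K)
  (b := fun n => 2 * aj j0 * (Ex (law n) (fun c => `|Xprev j0 m c|) +
                              3 * Ex (law n) (fun c => `|Yf j0 c|))) (C := 9)); last first.
  apply: lin_scal => //; apply: lin_add => //; apply: lin_scal => //.
move=> n hn.
apply: (le_trans (Ex_step_le (g := fun c => Xm j0 m c ^+ 2 +
      2 * aj j0 * (`|Xprev j0 m c| + 3 * `|Yf j0 c|) + 9) hn _)).
  by move=> c hg _; exact: S_X2.
  set d := law n.
  have E1 : Ex d (fun c => Xm j0 m c ^+ 2 + 2 * aj j0 * (`|Xprev j0 m c| + 3 * `|Yf j0 c|) + 9) =
     Ex d (fun c => Xm j0 m c ^+ 2) + 2 * aj j0 * (Ex d (fun c => `|Xprev j0 m c|) +
      3 * Ex d (fun c => `|Yf j0 c|)) + 9 * Ex d (fun _ => 1).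
    have F1 := Ex_add d (fun c => Xm j0 m c ^+ 2 + 2 * aj j0 * (`|Xprev j0 m c| + 3 * `|Yf j0 c|)) (fun _ => 9).
    have F2 := Ex_add d (fun c => Xm j0 m c ^+ 2) (fun c => 2 * aj j0 * (`|Xprev j0 m c| + 3 * `|Yf j0 c|)).
    have F3 := Ex_scal d (2 * aj j0) (fun c => `|Xprev j0 m c| + 3 * `|Yf j0 c|).
    have F4 := Ex_add d (fun c => `|Xprev j0 m c|) (fun c => 3 * `|Yf j0 c|).
    have F5 := Ex_scal d 3 (fun c => `|Yf j0 c|).
    have F6 := Ex_const d 9.
    move: F1 F2 F3 F4 F5 F6; cbv beta => F1 F2 F3 F4 F5 F6.
    by rewrite F1 F2 F3 F4 F5 F6.
  rewrite E1; apply: lerD => //.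
  have [_ hm] := inv_w hn.
by apply: ler_piMr => //; lra.
Qed.

Lemma eX_small j0 m : 0 < p j0 -> small2 (fun n => Ex (law n) (fun c => Xm j0 m c ^+ 2)).
Proof.
move=> hp; elim: m => [|m IH].
  apply: eX_step => //; apply: (lin_le _ lin0) => n.
  by rewrite /Ex big1 // => x _; rewrite /= normr0 mulr0.
apply: eX_step => //=.
exact: (L_abs (K0 := K) inv_w IH).
Qed.
Definition cj k j : R := if p j == 0 then 0
   else p j / (1 + rr p q j) * (rr p q j / (1 + rr p q j)) ^+ k.
Definition Xj k j (c : config K) : R := Nj j k c - cj k j * (size c)%:R.

Lemma eXj_small k j : small2 (fun n => Ex (law n) (fun c => Xj k j c ^+ 2)).
Proof.
case: (eqVneq (p j) 0) => hpj.
  apply: (small2_le (K0 := K) _ (eY_small j)) => n hn.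
  have [h0 _] := inv_w hn.
  apply: Ex_le_in => // x _.
  rewrite /Xj /Yf /cj hpj eqxx !mul0r !subr0.
  rewrite ler_sqr ?nnegrE; [exact: Nj_leM | exact: Nj_ge0 | ].
  exact: (le_trans (Nj_ge0 j k x.2) (Nj_leM j k x.2)).
have hp : 0 < p j by rewrite lt_def hpj hp0.
apply: (small2_le (K0 := 0%N) _ (eX_small k hp)) => n _.
rewrite le_eqVlt; apply/orP; left; apply/eqP; apply: eq_bigr => x _.
rewrite /Xj /Xm /Xf /cj (negbTE hpj) /gg /rj /aj /rr.
by congr (_ * (_ - _ * _) ^+ 2); rewrite mulrA.
Qed.

Lemma count_natr (T : Type) (P : pred T) (s : seq T) :
  ((count P s)%:R : R) = \sum_(v <- s) (P v)%:R.
Proof.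
elim: s => [|x s IH] /=; first by rewrite big_nil.
by rewrite big_cons natrD IH.
Qed.

Lemma Nk_sum k (c : config K) : ((Nk k c)%:R : R) = \sum_j Nj j k c.
Proof.
rewrite /Nk count_natr.
rewrite (eq_bigr (fun j => \sum_(v <- iota 0 (size c)) (ty c v == j)%:R * (outdeg c v == k)%:R)); last first.
  move=> j _; rewrite /Nj vertsE big_filter big_mkcond /=.
  by apply: eq_bigr => v _; case: (ty c v == j); rewrite ?mul1r ?mul0r.
rewrite exchange_big /=; apply: eq_bigr => v _.
rewrite (eq_bigr (fun j => (j == ty c v)%:R * (outdeg c v == k)%:R)); last first.
  by move=> j _; rewrite eq_sym.
by rewrite sum_pred1_ord.
Qed.

Lemma cauchy_sum (x : 'I_K -> R) : (\sum_j x j) ^+ 2 <= K%:R * \sum_j x j ^+ 2.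
Proof.
have h : 0 <= \sum_i \sum_j (x i - x j) ^+ 2.
  by apply: sumr_ge0 => i _; apply: sumr_ge0 => j _; exact: sqr_ge0.
set Sx := \sum_j x j; set S2 := \sum_j x j ^+ 2.
have E : \sum_i \sum_j (x i - x j) ^+ 2 = 2 * (K%:R * S2) - 2 * Sx ^+ 2.
  rewrite (eq_bigr (fun i => K%:R * x i ^+ 2 - 2 * (x i * Sx) + S2)); last first.
    move=> i _.
    rewrite (eq_bigr (fun j => (x i ^+ 2 - 2 * (x i * x j)) + x j ^+ 2)); last by move=> j _; ring.
    rewrite big_split /= sumrB sumr_const card_ord.
    have -> : \sum_j 2 * (x i * x j) = 2 * (x i * Sx) by rewrite /Sx !big_distrr.
    by rewrite -[x i ^+ 2 *+ K]mulr_natl.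
  rewrite big_split /= sumrB sumr_const card_ord.
  have -> : \sum_i K%:R * x i ^+ 2 = K%:R * S2 by rewrite /S2 big_distrr.
  have -> : \sum_i 2 * (x i * Sx) = 2 * (Sx * Sx).
    by rewrite /Sx -!big_distrr /= -big_distrl /=.
  rewrite -mulr_natl expr2; ring.
lra.
Qed.
Lemma final_sec k eps delta : 0 < eps -> 0 < delta ->
  exists N : nat, forall n : nat, (N <= n)%N -> (K <= n)%N ->
    cmrt_prob p q n (fun c => eps < `|(Nk k c)%:R / n%:R - ck p q k|) <= delta.
Proof.
move=> he hd.
have hK : (0 < K)%N by exact: (leq_ltn_trans (leq0n i0) (ltn_ord i0)).
have hKr : 0 < (K%:R : R) by rewrite ltr0n.
have hs := small2_sum (index_enum 'I_K) (fun j => eXj_small k j).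
have hdl : 0 < delta * eps ^+ 2 / K%:R.
  by apply: divr_gt0 => //; apply: mulr_gt0 => //; exact: exprn_gt0.
have [N HN] := hs _ hdl.
exists (maxn N 1) => n hn hKn.
have hnN : (N <= n)%N := leq_trans (leq_maxl _ _) hn.
have hn1 : (1 <= n)%N := leq_trans (leq_maxr _ _) hn.
have hx : 0 < (n%:R : R) by rewrite ltr0n.
have [hinv hm] := inv_all hKn.
have hex : 0 < eps * n%:R by exact: mulr_gt0.
have hex2 : 0 < (eps * n%:R) ^+ 2 by exact: exprn_gt0.
set Z := fun c => K%:R / (eps * n%:R) ^+ 2 * \sum_j Xj k j c ^+ 2.
have hZ0 : forall c, 0 <= Z c.
  move=> c; apply: mulr_ge0; first by apply: divr_ge0; [exact: ltW | exact: ltW].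
  by apply: sumr_ge0 => j _; exact: sqr_ge0.
apply: (le_trans (y := Ex (law n) Z)).
  rewrite /cmrt_prob big_mkcond /Ex big_seq [X in _ <= X]big_seq; apply: ler_sum => y hy.
  have [w0 hg hsz] := hinv y hy.
  case: ifP => hE; last by apply: mulr_ge0.
  rewrite -{1}(mulr1 y.1); apply: ler_wpM2l => //.
  rewrite /Z mulrAC ler_pdivlMr // mul1r.
  have hsum : (Nk k y.2)%:R / n%:R - ck p q k = (\sum_j Xj k j y.2) / n%:R.
    rewrite Nk_sum /Xj sumrB -big_distrl /= hsz.
    have -> : ck p q k = \sum_j cj k j by [].
    by field; apply: lt0r_neq0.
  have hinv0 : 0 <= (n%:R : R)^-1 by rewrite invr_ge0; exact: ltW.
  move: hE; rewrite hsum normrM (ger0_norm hinv0) => hE.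
  have h1 : eps * n%:R < `|\sum_j Xj k j y.2|.
    by move: hE; rewrite ltr_pdivlMr.
  have h2 : (eps * n%:R) ^+ 2 < (\sum_j Xj k j y.2) ^+ 2.
    rewrite -[X in _ < X]real_normK ?num_real //.
    move: h1; set t := `|_|; move=> h1; nra.
  have h3 := cauchy_sum (fun j => Xj k j y.2).
  lra.
rewrite /Z Ex_scal Ex_sum.
have := HN n hnN => h.
apply: (le_trans (ler_wpM2l _ h)).
  by apply: divr_ge0; [exact: ltW | exact: ltW].
rewrite le_eqVlt; apply/orP; left; apply/eqP; rewrite exprMn; field.
by rewrite !lt0r_neq0.
Qed.
End Main.

Unset Implicit Arguments.

Theorem theorem3p5 (R : realType) (K : nat) (p : 'I_K -> R)
  (q : 'I_K -> 'I_K -> R)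
  (hK : (2 <= K)%N)
  (hp0 : forall i, 0 <= p i)
  (hp1 : \sum_i p i = 1)
  (hpmax : forall i0 : 'I_K, val i0 = 0%N -> 0 < p i0 /\ forall j, p j <= p i0)
  (hq0 : forall i j, 0 <= q i j)
  (hq1 : forall i, \sum_j q i j = 1)
  (k : nat) (eps delta : R) (heps : 0 < eps) (hdelta : 0 < delta) :
  exists N : nat, forall n : nat, (N <= n)%N -> (K <= n)%N ->
    cmrt_prob p q n
      (fun c => eps < `|(Nk k c)%:R / n%:R - ck p q k|) <= delta.
Proof.
have hK0 : (0 < K)%N by apply: leq_trans hK.
exact: (final_sec (Ordinal hK0) hp0 hp1 hq0 hq1 k heps hdelta).
Qed.
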